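(* Let $N\ge 1$ and $-\infty<a_i\le b_i<\infty$ with $r_i=(b_i-a_i)/2>0$ for all $i$; set $m_i=(a_i+b_i)/2$, $\Theta=\prod_{i=1}^N[a_i,b_i]$, $T(y)=\sum_{i=1}^N y_i$. Let $0<n<N$ and \[ V_n=\min_{0<\pi_i\le 1,\ \sum_{i=1}^N\pi_i\le n}\ \sum_{i=1}^N r_i^2\,\frac{1-\pi_i}{\pi_i}. \] Then, taking the infimum over all pairs $(p,\delta)$ where $p$ is a sampling design with $\pi_i=\mathbb P_p(i\in S)>0$ for all $i$ and $\mathbb E_p[|S|]\le n$, and $\delta$ is an unbiased estimator for $p$, \[ \inf_{p,\delta}\sup_{y\in\Theta}R(\delta,p;y)=V_n . \] Moreover, $V_n$ is attained by sampling each unit independently with inclusion probabilities $\pi_i^*=\min(1,c\,r_i)$, where $c>0$ is chosen so that $\sum_{i=1}^N\pi_i^*=n$, and using the estimator $\widehat T(y_S)=\sum_{i=1}^N m_i+\sum_{i\in S}\frac{y_i-m_i}{\pi_i^*}$.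
   Context: A sampling design is a probability distribution $p$ on the subsets $s\subseteq\{1,\dots,N\}$; $S$ denotes the random sample drawn from $p$, $\mathbb P_p$ and $\mathbb E_p$ denote probability and expectation with respect to $p$. An estimator $\delta$ is a collection of measurable functions $\delta_s:\Theta_s\to\mathbb R$, one for each subset $s$, where $\Theta_s=\prod_{i\in s}[a_i,b_i]$; for $y\in\Theta$ write $y_s=(y_i)_{i\in s}$. The estimator is unbiased if $\mathbb E_p[\delta_S(y_S)]=T(y)$ for all $y\in\Theta$. The risk is $R(\delta,p;y)=\mathbb E_p[(\delta_S(y_S)-T(y))^2]$. *)

(* Defs.v *)
From HB Require Import structures.
From mathcomp Require Import all_boot all_order all_algebra.
From mathcomp Require Import all_classical all_reals all_analysis.
Set Implicit Arguments. Unset Strict Implicit. Unset Printing Implicit Defensive.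
Import Order.TTheory GRing.Theory Num.Theory.
Local Open Scope classical_set_scope.
Local Open Scope ring_scope.

Section Sampling.
Variables (R : realType) (N : nat).

Definition Theta (a b : 'I_N -> R) : set ('I_N -> R) :=
  [set y | forall i, a i <= y i <= b i].

Definition total (y : 'I_N -> R) : R := \sum_(i < N) y i.

Definition is_design (p : {ffun {set 'I_N} -> R}) : Prop :=
  (forall s, 0 <= p s) /\ \sum_(s : {set 'I_N}) p s = 1.

Definition incl_prob (p : {ffun {set 'I_N} -> R}) (i : 'I_N) : R :=
  \sum_(s : {set 'I_N} | i \in s) p s.

Definition exp_size (p : {ffun {set 'I_N} -> R}) : R :=
  \sum_(s : {set 'I_N}) p s * (#|s|)%:R.

(* An estimator delta = (delta_s)_s with delta_s : Theta_s -> R is encoded as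
   a family delta s : ('I_N -> R) -> R that depends only on the coordinates
   y_i, i in s (i.e. delta s y = delta_s (y_s)). *)
Definition estimator_fam := {set 'I_N} -> ('I_N -> R) -> R.

Definition local (delta : estimator_fam) : Prop :=
  forall (s : {set 'I_N}) (y y' : 'I_N -> R), (forall i, i \in s -> y i = y' i) ->
    delta s y = delta s y'.

(* Borel (= product) sigma-algebra on R^N, generated by coordinate cylinders *)
Definition cylinders : set (set ('I_N -> R)) :=
  [set C | exists i (A : set R), measurable A /\ C = [set y | A (y i)]].

Definition RN_measurable : set (set ('I_N -> R)) := <<s cylinders >>.

Definition is_estimator (a b : 'I_N -> R) (delta : estimator_fam) : Prop :=
  local delta /\
  forall (s : {set 'I_N}) (B : set R), measurable B ->
    RN_measurable (Theta a b `&` (delta s) @^-1` B).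

Definition unbiased (a b : 'I_N -> R) (p : {ffun {set 'I_N} -> R})
  (delta : estimator_fam) : Prop :=
  forall y, Theta a b y -> \sum_(s : {set 'I_N}) p s * delta s y = total y.

Definition risk (p : {ffun {set 'I_N} -> R}) (delta : estimator_fam)
  (y : 'I_N -> R) : R :=
  \sum_(s : {set 'I_N}) p s * (delta s y - total y) ^+ 2.

Definition max_risk (a b : 'I_N -> R) (p : {ffun {set 'I_N} -> R})
  (delta : estimator_fam) : \bar R :=
  ereal_sup [set (risk p delta y)%:E | y in Theta a b].

Definition admissible (a b : 'I_N -> R) (n : R) (p : {ffun {set 'I_N} -> R})
  (delta : estimator_fam) : Prop :=
  [/\ is_design p, forall i, 0 < incl_prob p i, exp_size p <= n,
      is_estimator a b delta & unbiased a b p delta].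

Definition minimax_value (a b : 'I_N -> R) (n : R) : \bar R :=
  ereal_inf [set max_risk a b pd.1 pd.2 | pd in
              [set pd : {ffun {set 'I_N} -> R} * estimator_fam |
                 admissible a b n pd.1 pd.2]].

Definition half_range (a b : 'I_N -> R) (i : 'I_N) : R := (b i - a i) / 2.
Definition midpoint (a b : 'I_N -> R) (i : 'I_N) : R := (a i + b i) / 2.

Definition Vn (a b : 'I_N -> R) (n : R) : \bar R :=
  ereal_inf [set (\sum_(i < N) half_range a b i ^+ 2 * (1 - pi i) / pi i)%:E
             | pi in [set pi : 'I_N -> R |
                        (forall i, 0 < pi i <= 1) /\ \sum_(i < N) pi i <= n]].

Definition poisson_design (pi : 'I_N -> R) : {ffun {set 'I_N} -> R} :=
  [ffun s : {set 'I_N} => \prod_(i in s) pi i * \prod_(i in ~: s) (1 - pi i)].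

Definition diff_estimator (m pi : 'I_N -> R) : estimator_fam :=
  fun s y => \sum_(i < N) m i + \sum_(i in s) (y i - m i) / pi i.

End Sampling.

(* Main.v *)
Require Import Defs.
From HB Require Import structures.
From mathcomp Require Import all_boot all_order all_algebra.
From mathcomp Require Import all_classical all_reals all_analysis.
From mathcomp Require Import ring lra.
From mathcomp Require measurable_realfun measurable_fun_approximation.
Import Order.TTheory GRing.Theory Num.Theory.
Local Open Scope classical_set_scope.
Local Open Scope ring_scope.

Module MP1.
Local Set Implicit Arguments. Local Unset Strict Implicit.

Section Pois.
Variables (R : realType) (N : nat).
Implicit Types (pi f g : 'I_N -> R) (s A : {set 'I_N}).

Definition pw pi s : R := \prod_(i < N) (if i \in s then pi i else 1 - pi i).

Lemma poisson_designE pi s : poisson_design pi s = pw pi s.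
Proof.
rewrite ffunE /pw [RHS](bigID (fun i => i \in s)) /=.
congr (_ * _); first by apply: eq_bigr => i ->.
rewrite [RHS](eq_bigl (fun i => i \in ~: s)); last by move=> i; rewrite finset.in_setC.
by apply: eq_bigr => i; rewrite finset.in_setC => /negbTE ->.
Qed.

Lemma sum_if f g : \sum_(s : {set 'I_N}) \prod_(i < N) (if i \in s then f i else g i)
  = \prod_(i < N) (f i + g i).
Proof. by rewrite bigA_distr. Qed.

Lemma pw_sub pi A : \sum_(s : {set 'I_N}) pw pi s * (A \subset s)%:R = \prod_(i in A) pi i.
Proof.
pose g i := if i \in A then 0 else 1 - pi i.
transitivity (\sum_(s : {set 'I_N}) \prod_(i < N) (if i \in s then pi i else g i)).
  apply: eq_bigr => s _; rewrite /pw.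
  have [sub|nsub] := boolP (A \subset s).
    rewrite mulr1; apply: eq_bigr => i _.
    case: ifP => // his; rewrite /g; case: ifP => // hiA.
    by move/fintype.subsetP: sub => /(_ i hiA); rewrite his.
  rewrite mulr0; apply/esym.
  have [i hiA his] : exists2 i, i \in A & i \notin s.
    move/fintype.subsetPn: nsub => [i hi1 hi2]; by exists i.
  rewrite (bigD1 i) //= (negbTE his) /g hiA mul0r //.
rewrite sum_if (bigID (fun i => i \in A)) /= [X in _ * X]big1 ?mulr1.
  by apply: eq_bigr => i hi; rewrite /g hi addr0.
by move=> i /negbTE hi; rewrite /g hi addrCA subrr addr0.
Qed.

Lemma pw_sum1 pi : \sum_(s : {set 'I_N}) pw pi s = 1.
Proof.
rewrite -[RHS](big_set0 1 *%R pi) -pw_sub; apply: eq_bigr => s _.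
by rewrite finset.sub0set mulr1.
Qed.

Lemma pw_ind pi i : \sum_(s : {set 'I_N}) pw pi s * (i \in s)%:R = pi i.
Proof.
have -> : pi i = \prod_(k in [set i]%SET) pi k by rewrite big_set1.
rewrite -pw_sub; apply: eq_bigr => s _.
by rewrite finset.sub1set.
Qed.

Lemma pw_ind2 pi i j : i != j ->
  \sum_(s : {set 'I_N}) pw pi s * ((i \in s)%:R * (j \in s)%:R) = pi i * pi j.
Proof.
move=> hij.
have -> : pi i * pi j = \prod_(k in [set i; j]%SET) pi k.
  by rewrite big_setU1 ?inE // big_set1.
rewrite -pw_sub; apply: eq_bigr => s _.
rewrite finset.subUset !finset.sub1set; by case: (i \in s); case: (j \in s); rewrite ?mulr1 ?mulr0 ?mul0r.
Qed.

Lemma pw_ge0 pi s : (forall i, 0 <= pi i <= 1) -> 0 <= pw pi s.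
Proof.
move=> h; apply: prodr_ge0 => i _; case: ifP => _; have /andP[h1 h2] := h i => //.
by rewrite subr_ge0.
Qed.


Definition Ind (i : 'I_N) s : R := (i \in s)%:R.

Lemma pw_lin2 pi i j (x y z t : R) :
  \sum_(s : {set 'I_N}) pw pi s * ((x * Ind i s + y) * (z * Ind j s + t)) =
  x * z * (if i == j then pi i else pi i * pi j) + x * t * pi i + y * z * pi j + y * t.
Proof.
have E : forall s, pw pi s * ((x * Ind i s + y) * (z * Ind j s + t)) =
   x * z * (pw pi s * (Ind i s * Ind j s)) + x * t * (pw pi s * Ind i s)
   + y * z * (pw pi s * Ind j s) + y * t * pw pi s.
  by move=> s; ring.
rewrite (eq_bigr _ (fun s _ => E s)) !big_split /= -!mulr_sumr.
rewrite /Ind pw_ind pw_ind pw_sum1 mulr1.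
case: eqVneq => [<-|hij]; last by rewrite pw_ind2.
congr (_ + _ + _ + _); congr (_ * _); rewrite -[RHS](pw_ind pi i).
by apply: eq_bigr => s _; case: (i \in s); rewrite ?mulr1 ?mulr0.
Qed.

Lemma pw_lin1 pi i (x y : R) :
  \sum_(s : {set 'I_N}) pw pi s * (x * Ind i s + y) = x * pi i + y.
Proof.
have E : forall s, pw pi s * (x * Ind i s + y) = x * (pw pi s * Ind i s) + y * pw pi s.
  by move=> s; ring.
by rewrite (eq_bigr _ (fun s _ => E s)) big_split /= -!mulr_sumr pw_ind pw_sum1 mulr1.
Qed.

Lemma sum_exch3 (w : {set 'I_N} -> R) (F : 'I_N -> 'I_N -> {set 'I_N} -> R) :
  \sum_(s : {set 'I_N}) w s * (\sum_(i < N) \sum_(j < N) F i j s) =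
  \sum_(i < N) \sum_(j < N) \sum_(s : {set 'I_N}) w s * F i j s.
Proof.
under eq_bigr do rewrite mulr_sumr.
rewrite exchange_big; apply: eq_bigr => i _.
under eq_bigr do rewrite mulr_sumr.
by rewrite exchange_big.
Qed.

Lemma sum_exch1 (w : {set 'I_N} -> R) (F : 'I_N -> {set 'I_N} -> R) :
  \sum_(s : {set 'I_N}) w s * (\sum_(i < N) F i s) =
  \sum_(i < N) \sum_(s : {set 'I_N}) w s * F i s.
Proof.
under eq_bigr do rewrite mulr_sumr.
by rewrite exchange_big.
Qed.

Lemma incl_prob_pw pi i : incl_prob (poisson_design pi) i = pi i.
Proof.
rewrite /incl_prob big_mkcond /= -[RHS](pw_ind pi i); apply: eq_bigr => s _.
by rewrite poisson_designE; case: (i \in s); rewrite ?mulr1 ?mulr0.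
Qed.

Lemma card_Ind s : (#|s|)%:R = \sum_(i < N) Ind i s :> R.
Proof.
rewrite -sum1_card natr_sum big_mkcond /=; apply: eq_bigr => i _.
by rewrite /Ind; case: (i \in s).
Qed.

Lemma exp_size_pw pi : exp_size (poisson_design pi) = \sum_(i < N) pi i.
Proof.
rewrite /exp_size.
under eq_bigr do rewrite card_Ind poisson_designE.
rewrite sum_exch1; apply: eq_bigr => i _; exact: pw_ind.
Qed.

Lemma diff_err pi m y s :
  diff_estimator m pi s y - Defs.total y =
  \sum_(i < N) ((y i - m i) / pi i * Ind i s + - (y i - m i)).
Proof.
rewrite /diff_estimator /Defs.total big_split /= sumrN.
rewrite [\sum_(i in s) _]big_mkcond /=.
have -> : \sum_(i < N) (y i - m i) = \sum_(i < N) y i - \sum_(i < N) m i.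
  by rewrite sumrB.
rewrite [X in _ = X - _](eq_bigr (fun i => if i \in s then (y i - m i) / pi i else 0)).
  by rewrite opprB; ring.
by move=> i _; rewrite /Ind; case: (i \in s); rewrite ?mulr1 ?mulr0.
Qed.

Lemma unbiased_pw pi m y : (forall i, pi i != 0) ->
  \sum_(s : {set 'I_N}) poisson_design pi s * diff_estimator m pi s y = Defs.total y.
Proof.
move=> hpi.
have E : forall s, poisson_design pi s * diff_estimator m pi s y =
   pw pi s * (diff_estimator m pi s y - Defs.total y) + pw pi s * Defs.total y.
  by move=> s; rewrite poisson_designE; ring.
rewrite (eq_bigr _ (fun s _ => E s)) big_split /= -mulr_suml pw_sum1 mul1r.
rewrite -[RHS]add0r; congr (_ + _).
under eq_bigr do rewrite diff_err.
rewrite sum_exch1 big1 // => i _.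
rewrite pw_lin1 mulfVK ?subrr //.
Qed.

Lemma risk_pw pi m y : (forall i, pi i != 0) ->
  risk (poisson_design pi) (diff_estimator m pi) y =
  \sum_(i < N) (y i - m i) ^+ 2 * (1 - pi i) / pi i.
Proof.
move=> hpi; rewrite /risk.
under eq_bigr do rewrite diff_err expr2 mulr_suml poisson_designE.
under eq_bigr do under eq_bigr do rewrite mulr_sumr.
rewrite sum_exch3; apply: eq_bigr => i _.
under eq_bigr do rewrite pw_lin2.
rewrite (bigD1 i) //= big1 ?addr0.
  rewrite eqxx; field; exact: hpi.
move=> j hji; rewrite eq_sym (negbTE hji); field.
by rewrite hpi hpi.
Qed.

End Pois.
Arguments Ind {R N}.

End MP1.
Import MP1.

Module MP2.

Section Opt.
Variables (R : realType).

Lemma per_i (c r x : R) : 0 < c -> 0 < r -> 0 < x <= 1 ->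
  r ^+ 2 * (1 - Num.min 1 (c * r)) / Num.min 1 (c * r) + Num.min 1 (c * r) / c ^+ 2
  <= r ^+ 2 * (1 - x) / x + x / c ^+ 2.
Proof.
move=> c0 r0 /andP[x0 x1]; rewrite -subr_ge0.
have cr0 : 0 < c * r by rewrite mulr_gt0.
have [h|h] := real_leP (num_real 1) (num_real (c * r)).
  have -> : r ^+ 2 * (1 - x) / x + x / c ^+ 2 - (r ^+ 2 * (1 - 1) / 1 + 1 / c ^+ 2)
     = (1 - x) * ((c * r) ^+ 2 - x) / (x * c ^+ 2).
    by field; rewrite ?(gt_eqF c0) ?(gt_eqF x0) ?(gt_eqF r0).
  apply: divr_ge0; last by rewrite mulr_ge0 // ltW // exprn_gt0.
  apply: mulr_ge0; first by rewrite subr_ge0.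
  rewrite subr_ge0; apply: le_trans x1 _; rewrite expr2.
  by rewrite -[1]mulr1 ler_pM.
have -> : r ^+ 2 * (1 - x) / x + x / c ^+ 2 - (r ^+ 2 * (1 - c * r) / (c * r) + c * r / c ^+ 2)
     = (c * r - x) ^+ 2 / (x * c ^+ 2).
  by field; rewrite ?(gt_eqF c0) ?(gt_eqF x0) ?(gt_eqF r0).
by apply: divr_ge0; rewrite ?sqr_ge0 // mulr_ge0 // ltW // exprn_gt0.
Qed.


Lemma min_pos (c r : R) : 0 < c -> 0 < r -> 0 < Num.min 1 (c * r) <= 1.
Proof.
move=> c0 r0; have cr0 : 0 < c * r by rewrite mulr_gt0.
by have [h|h] := real_leP (num_real 1) (num_real (c * r)); rewrite ?ltr01 ?lexx ?cr0 ?ltW.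
Qed.

Variable N : nat.

Lemma opt_sum (r : 'I_N -> R) (c n : R) (pi : 'I_N -> R) :
  (forall i, 0 < r i) -> 0 < c ->
  \sum_(i < N) Num.min 1 (c * r i) = n ->
  (forall i, 0 < pi i <= 1) -> \sum_(i < N) pi i <= n ->
  \sum_(i < N) r i ^+ 2 * (1 - Num.min 1 (c * r i)) / Num.min 1 (c * r i)
  <= \sum_(i < N) r i ^+ 2 * (1 - pi i) / pi i.
Proof.
move=> hr c0 hs hpi hsum.
have H : \sum_(i < N) (r i ^+ 2 * (1 - Num.min 1 (c * r i)) / Num.min 1 (c * r i) + Num.min 1 (c * r i) / c ^+ 2) <= \sum_(i < N) (r i ^+ 2 * (1 - pi i) / pi i + pi i / c ^+ 2).
  by apply: ler_sum => i _; apply: per_i.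
have H' := c0; rewrite ?big_split /= -!mulr_suml hs in H.
have : \sum_(i < N) pi i / c ^+ 2 <= n / c ^+ 2.
  by rewrite -mulr_suml ler_wpM2r // invr_ge0 ltW // exprn_gt0.
rewrite -mulr_suml; lra.
Qed.

Lemma Vn_val (a b : 'I_N -> R) (c n : R) :
  (forall i, 0 < half_range a b i) -> 0 < c ->
  \sum_(i < N) Num.min 1 (c * half_range a b i) = n ->
  Vn a b n = (\sum_(i < N) half_range a b i ^+ 2 * (1 - Num.min 1 (c * half_range a b i))
                / Num.min 1 (c * half_range a b i))%:E.
Proof.
move=> hr c0 hs; apply/le_anti/andP; split.
  apply: ereal_inf_lbound; exists (fun i => Num.min 1 (c * half_range a b i)) => //.
  split; last by rewrite hs.
  by move=> i; apply: min_pos.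
apply: le_ereal_inf_tmp => _ [pi [hpi hsum] <-]; rewrite lee_fin.

exact: (@opt_sum (half_range a b) c n pi hr c0 hs hpi hsum).
Qed.

Lemma max_risk_pw (a b pi : 'I_N -> R) : (forall i, a i <= b i) ->
  (forall i, 0 < pi i <= 1) ->
  max_risk a b (poisson_design pi) (diff_estimator (midpoint a b) pi) =
  (\sum_(i < N) half_range a b i ^+ 2 * (1 - pi i) / pi i)%:E.
Proof.
move=> hab hpi.
have pi0 : forall i, pi i != 0 by move=> i; have /andP[h _] := hpi i; rewrite gt_eqF.
apply/le_anti/andP; split.
  apply: ge_ereal_sup => _ [y hy <-]; rewrite lee_fin risk_pw //.
  apply: ler_sum => i _; have /andP[p0 p1] := hpi i.
  apply: ler_wpM2r; first by rewrite invr_ge0 ltW.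
  apply: ler_wpM2r; first by rewrite subr_ge0.
  have /andP[ha hb] := hy i.
  rewrite /midpoint /half_range; nra.
apply: ereal_sup_ubound; exists b; first by move=> i; rewrite hab lexx.
rewrite risk_pw //; congr (_%:E); apply: eq_bigr => i _.
by rewrite /midpoint /half_range; congr (_ ^+ 2 * _ / _); field.
Qed.

End Opt.

End MP2.
Import MP2.

Module MP3.
Import numFieldNormedType.Exports.

Section Exc.
Variables (R : realType) (N : nat).

Lemma cont_min1 (r : R) : continuous (fun c : R => Num.min 1 (c * r)).
Proof.
move=> x.
have := @continuous_min R R (fun=> 1) (fun c => c * r) x.
apply.
  exact: cst_continuous.
exact: (@mulrr_continuous R r x).
Qed.

Lemma cont_sum (F : 'I_N -> R -> R) : (forall i, continuous (F i)) ->
  forall s : seq 'I_N, continuous (fun c : R => \sum_(i <- s) F i c).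
Proof.
move=> hF; elim=> [|j s IH].
  rewrite (_ : (fun c => _) = fun=> 0); first exact: cst_continuous.
  by apply: funext => c; rewrite big_nil.
rewrite (_ : (fun c => _) = (F j + (fun c => \sum_(i <- s) F i c))); last first.
  by apply: funext => c; rewrite big_cons.
move=> x; apply: continuousD; [exact: hF|exact: IH].
Qed.


Lemma min1_l (x : R) : 1 <= x -> Num.min 1 x = 1.
Proof. by move=> h; case: (real_leP (num_real 1) (num_real x)) => // h'; lra. Qed.

Lemma min1_r (x : R) : x <= 1 -> Num.min 1 x = x.
Proof. by move=> h; case: (real_leP (num_real 1) (num_real x)) => // h'; lra. Qed.

Lemma exists_c (r : 'I_N -> R) (n : nat) : (forall i, 0 < r i) -> (0 < n < N)%N ->
  exists c : R, 0 < c /\ \sum_(i < N) Num.min 1 (c * r i) = n%:R.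
Proof.
move=> hr /andP[n0 nN].
pose f := fun c : R => \sum_(i < N) Num.min 1 (c * r i).
pose C := \sum_(i < N) (r i)^-1.
have f0 : f 0 = 0.
  by rewrite /f big1 // => i _; rewrite mul0r min1_r ?ler01.
have fC : f C = N%:R.
  rewrite /f (eq_bigr (fun=> 1)) ?sumr_const ?card_ord //.
  move=> i _; apply: min1_l.
  have : (r i)^-1 <= C.
    rewrite /C (bigD1 i) //= lerDl; apply: sumr_ge0 => j _.
    by rewrite invr_ge0 ltW.
  move=> h; apply: le_trans (ler_wpM2r (ltW (hr i)) h).
  by rewrite mulVf ?gt_eqF.
have C0 : 0 <= C by rewrite /C sumr_ge0 // => i _; rewrite invr_ge0 ltW.
have cf : {within `[0, C], continuous f}.
  apply: continuous_subspaceT; apply: cont_sum => i; exact: cont_min1.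
have hv : Num.min (f 0) (f C) <= n%:R <= Num.max (f 0) (f C).
  rewrite f0 fC.
  have h1 : (0 : R) <= N%:R by rewrite ler0n.
  have h2 : (n%:R : R) <= N%:R by rewrite ler_nat ltnW.
  have h3 : (0 : R) <= n%:R by rewrite ler0n.
  case: (real_leP (num_real (0:R)) (num_real (N%:R : R))) => h; apply/andP; split => //; lra.
have [c hc fc] := IVT C0 cf hv.
exists c; split => //.
move: hc; rewrite in_itv /= => /andP[c0 _].
rewrite lt_neqAle c0 andbT; apply/eqP => ec.
move: fc; rewrite -ec f0 => /eqP; rewrite eq_sym pnatr_eq0 => /eqP en.
by rewrite en in n0.
Qed.

End Exc.

End MP3.

Module MP4.
Import numFieldNormedType.Exports.
Import measurable_realfun measurable_fun_approximation.

Section Meas.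
Variables (R : realType) (N : nat).

Let T := g_sigma_algebraType (@cylinders R N).

Lemma mproj (i : 'I_N) : measurable_fun (setT : set T) (fun y : T => y i).
Proof.
move=> _ A mA; rewrite setTI; apply: sub_sigma_algebra.
by exists i, A; split.
Qed.

Lemma maff (i : 'I_N) (k k' : R) : measurable_fun (setT : set T) (fun y : T => y i * k + k').
Proof.
apply: measurable_funD; last exact: measurable_cst.
apply: measurable_funM; [exact: mproj|exact: measurable_cst].
Qed.

Lemma mTheta (a b : 'I_N -> R) : measurable (Theta a b : set T).
Proof.
have -> : Theta a b = \bigcap_(i in [set: 'I_N]) [set y : T | `[a i, b i]%classic (y i)].
  apply/seteqP; split => y /=.
    by move=> hy i _ /=; rewrite in_itv /= hy.
  by move=> hy i; have := hy i Logic.I; rewrite /= in_itv.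
apply: fin_bigcap_measurable; first exact: finite_finset.
move=> i _; apply: sub_sigma_algebra; exists i, `[a i, b i]%classic; split => //.
Qed.

Lemma diff_is_estimator (a b m pi : 'I_N -> R) : is_estimator a b (diff_estimator m pi).
Proof.
split.
  move=> s y y' hyy'; rewrite /diff_estimator; congr (_ + _).
  by apply: eq_bigr => i hi; rewrite hyy'.
move=> s B mB.
have mf : measurable_fun (setT : set T) (fun y : T => diff_estimator m pi s y).
  have -> : (fun y : T => diff_estimator m pi s y) =
     (fun y : T => \sum_(i < N)
        (y i * (if i \in s then (pi i)^-1 else 0) +
           (if i \in s then - m i / pi i else 0)) + \sum_(i < N) m i).
    apply: funext => y; rewrite /diff_estimator addrC; congr (_ + _).
    rewrite big_mkcond /=; apply: eq_bigr => i _.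
    by case: (i \in s); rewrite ?mulr0 ?addr0 // mulrBl mulNr.
  apply: measurable_funD; last exact: measurable_cst.
  by apply: measurable_sum => i; apply: maff.
have := mf measurableT B mB; rewrite setTI => h.
exact: (measurableI _ _ (mTheta a b) h).
Qed.

End Meas.

End MP4.

Module MP5.

Section Lower.
Variables (R : realType) (N : nat).
Local Notation ST := {set 'I_N}.

Lemma bessel (w : ST -> R) (phi : 'I_N -> ST -> R) (f : ST -> R) :
  (forall e, 0 <= w e) ->
  (forall i j, \sum_(e : ST) w e * (phi i e * phi j e) = (i == j)%:R) ->
  \sum_(i < N) (\sum_(e : ST) w e * (f e * phi i e)) ^+ 2 <= \sum_(e : ST) w e * f e ^+ 2.
Proof.
move=> w0 orth.
set g := fun i => \sum_(e : ST) w e * (f e * phi i e).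
have H : 0 <= \sum_(e : ST) w e * (f e - \sum_(i < N) g i * phi i e) ^+ 2.
  by apply: sumr_ge0 => e _; rewrite mulr_ge0 ?sqr_ge0.
have E1 : forall e, w e * (f e - \sum_(i < N) g i * phi i e) ^+ 2 =
   w e * f e ^+ 2 - 2 * (\sum_(i < N) g i * (w e * (f e * phi i e)))
   + \sum_(i < N) \sum_(j < N) g i * g j * (w e * (phi i e * phi j e)).
  move=> e.
  have -> : \sum_(i < N) g i * (w e * (f e * phi i e)) = w e * f e * \sum_(i < N) g i * phi i e.
    by rewrite mulr_sumr; apply: eq_bigr => i _; ring.
  have -> : \sum_(i < N) \sum_(j < N) g i * g j * (w e * (phi i e * phi j e)) =
     w e * ((\sum_(i < N) g i * phi i e) * (\sum_(j < N) g j * phi j e)).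
    rewrite mulr_suml mulr_sumr; apply: eq_bigr => i _.
    rewrite mulr_sumr mulr_sumr; apply: eq_bigr => j _; ring.
  ring.
rewrite (eq_bigr _ (fun e _ => E1 e)) big_split /= sumrB -mulr_sumr in H.
have S1 : \sum_(e : ST) \sum_(i < N) g i * (w e * (f e * phi i e)) = \sum_(i < N) g i ^+ 2.
  rewrite exchange_big; apply: eq_bigr => i _; by rewrite -mulr_sumr expr2.
have S2 : \sum_(e : ST) \sum_(i < N) \sum_(j < N) g i * g j * (w e * (phi i e * phi j e))
    = \sum_(i < N) g i ^+ 2.
  rewrite exchange_big; apply: eq_bigr => i _; rewrite exchange_big /=.
  rewrite (bigD1 i) //= [X in _ + X]big1 ?addr0.
    by rewrite -mulr_sumr orth eqxx mulr1 expr2.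
  by move=> j hj; rewrite -mulr_sumr orth eq_sym (negbTE hj) mulr0.
rewrite S1 S2 in H; lra.
Qed.


Variables (a b : 'I_N -> R).
Local Notation r := (half_range a b).
Local Notation m := (midpoint a b).

Definition sg (i : 'I_N) (e : ST) : R := 2 * Ind i e - 1.
Definition yv (e : ST) : 'I_N -> R := fun i => m i + r i * sg i e.
Definition u : ST -> R := pw (fun _ => 1 / 2).

Lemma yv_Theta e : (forall i, a i <= b i) -> Theta a b (yv e).
Proof.
move=> hab i; have := hab i; rewrite /yv /sg /Ind /half_range /midpoint.
by case: (i \in e) => /= h; apply/andP; split; lra.
Qed.

Lemma half01 : forall i : 'I_N, 0 <= (fun _ => 1 / 2 : R) i <= 1.
Proof. by move=> i /=; apply/andP; split; lra. Qed.

Lemma u_ge0 e : 0 <= u e.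
Proof. exact: pw_ge0 half01. Qed.

Lemma u_orth i j : \sum_(e : ST) u e * (sg i e * sg j e) = (i == j)%:R.
Proof.
rewrite /u /sg.
have := pw_lin2 (fun _ => 1 / 2 : R) i j 2 (-1) 2 (-1).
rewrite (eq_bigr (fun e => pw (fun=> 1 / 2) e * ((2 * Ind i e - 1) * (2 * Ind j e - 1)))) => [->|e _]; last by [].
by case: eqP => _ /=; field.
Qed.

Lemma u_sg i : \sum_(e : ST) u e * sg i e = 0.
Proof.
rewrite /u /sg.
have := pw_lin1 (fun _ => 1 / 2 : R) i 2 (-1).
rewrite (eq_bigr (fun e => pw (fun=> 1 / 2) e * (2 * Ind i e - 1))) => [->|e _]; last by [].
by field.
Qed.

Lemma u_Tsg i : \sum_(e : ST) u e * (Defs.total (yv e) * sg i e) = r i.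
Proof.
have E : forall e, u e * (Defs.total (yv e) * sg i e) =
   (\sum_(j < N) m j) * (u e * sg i e) + \sum_(j < N) r j * (u e * (sg j e * sg i e)).
  move=> e; rewrite /Defs.total /yv big_split /= mulrDl mulrDr.
  congr (_ + _); first by ring.
  rewrite mulr_suml mulr_sumr; apply: eq_bigr => j _; ring.
rewrite (eq_bigr _ (fun e _ => E e)) big_split /= -mulr_sumr u_sg mulr0 add0r.
rewrite exchange_big /= (bigD1 i) //= [X in _ + X]big1 ?addr0.
  by rewrite -mulr_sumr u_orth eqxx mulr1.
by move=> j hj; rewrite -mulr_sumr u_orth (negbTE hj) mulr0.
Qed.

Definition flip (i : 'I_N) (e : ST) : ST :=
  if i \in e then (e :\ i)%SET else (i |: e)%SET.

Lemma mem_flip i e j : (j \in flip i e) = if j == i then ~~ (i \in e) else j \in e.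
Proof.
rewrite /flip; case: eqP => [->|/eqP hji].
  by case: ifP => h; rewrite !inE ?eqxx ?h.
by case: ifP => h; rewrite !inE (negbTE hji).
Qed.

Lemma flipK i : involutive (flip i).
Proof.
move=> e; apply/setP => j; rewrite !mem_flip; case: eqP => [->|//].
by rewrite eqxx negbK.
Qed.

Lemma sg_flip i e : sg i (flip i e) = - sg i e.
Proof. by rewrite /sg /Ind mem_flip eqxx; case: (i \in e) => /=; ring. Qed.

Lemma yv_flip i e j : j != i -> yv (flip i e) j = yv e j.
Proof. by move=> hj; rewrite /yv /sg /Ind mem_flip (negbTE hj). Qed.

Lemma u_const e : u e = \prod_(i < N) (1 / 2 : R).
Proof. by rewrite /u /pw; apply: eq_bigr => i _; case: ifP => _ //; field. Qed.

Lemma c_zero (delta : estimator_fam R N) (s : ST) (i : 'I_N) : local delta -> i \notin s ->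
  \sum_(e : ST) u e * (delta s (yv e) * sg i e) = 0.
Proof.
move=> hloc his.
set S := \sum_(e : ST) _.
have : S = - S.
  rewrite {1}/S (reindex_inj (can_inj (flipK i))) /= /S -sumrN.
  apply: eq_bigr => e _; rewrite sg_flip !u_const.
  rewrite (hloc s (yv (flip i e)) (yv e)); first by ring.
  move=> j hj; apply: yv_flip; apply: contraNneq his => <-; exact: hj.
move=> h; lra.
Qed.


Lemma incl_probE (p : {ffun ST -> R}) i : incl_prob p i = \sum_(s : ST) p s * Ind i s.
Proof.
rewrite /incl_prob big_mkcond /=; apply: eq_bigr => s _.
by rewrite /Ind; case: (i \in s); rewrite ?mulr1 ?mulr0.
Qed.

Lemma lower_bound (p : {ffun ST -> R}) (delta : estimator_fam R N) :
  (forall i, a i <= b i) -> is_design p -> (forall i, 0 < incl_prob p i) ->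
  local delta -> unbiased a b p delta ->
  exists e, \sum_(i < N) r i ^+ 2 * (1 - incl_prob p i) / incl_prob p i
            <= risk p delta (yv e).
Proof.
move=> hab [p0 p1] hpi hloc hunb.
pose c s i := \sum_(e : ST) u e * (delta s (yv e) * sg i e).
have cI : forall s i, c s i * Ind i s = c s i.
  move=> s i; rewrite /Ind; case: (boolP (i \in s)) => his /=; first by rewrite mulr1.
  by rewrite mulr0 /c c_zero.
have unb_c : forall i, \sum_(s : ST) p s * c s i = r i.
  move=> i; rewrite -(u_Tsg i).
  have E : forall s, p s * c s i = \sum_(e : ST) (u e * sg i e) * (p s * delta s (yv e)).
    by move=> s; rewrite /c mulr_sumr; apply: eq_bigr => e _; ring.
  rewrite (eq_bigr _ (fun s _ => E s)) exchange_big /=; apply: eq_bigr => e _.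
  rewrite -mulr_sumr hunb; [ring| exact: yv_Theta].
have per : forall i, r i ^+ 2 * (1 - incl_prob p i) / incl_prob p i <=
                     \sum_(s : ST) p s * (c s i - r i) ^+ 2.
  move=> i; set q := r i / incl_prob p i.
  have E : forall s, p s * (c s i - r i) ^+ 2 =
     p s * (c s i - q * Ind i s) ^+ 2 + (2 * q - 2 * r i) * (p s * c s i) + r i ^+ 2 * p s
     - q ^+ 2 * (p s * Ind i s)
     + 2 * q * p s * (c s i * Ind i s - c s i) + q ^+ 2 * p s * (Ind i s - Ind i s * Ind i s).
    by move=> s; ring.
  have I2 : forall s : ST, Ind i s * Ind i s = Ind i s :> R.
    by move=> t; rewrite /Ind; case: (i \in t); rewrite ?mulr1 ?mulr0.
  rewrite (eq_bigr _ (fun s _ => E s)) /=.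
  under eq_bigr do rewrite cI I2 !subrr !mulr0 !addr0.
  rewrite big_split /= sumrN !big_split /= -!mulr_sumr unb_c p1 -incl_probE.
  have K : (2 * q - 2 * r i) * r i + r i ^+ 2 * 1 - q ^+ 2 * incl_prob p i =
            r i ^+ 2 * (1 - incl_prob p i) / incl_prob p i.
    by rewrite /q; field; rewrite gt_eqF.
  have S0 : 0 <= \sum_(s : ST) p s * (c s i - q * Ind i s) ^+ 2.
    by apply: sumr_ge0 => s _; rewrite mulr_ge0 ?sqr_ge0.
  lra.
have avg : \sum_(i < N) r i ^+ 2 * (1 - incl_prob p i) / incl_prob p i <=
           \sum_(e : ST) u e * risk p delta (yv e).
  apply: (le_trans (ler_sum _ (fun i _ => per i))).
  rewrite exchange_big /= /risk.
  under [X in _ <= X]eq_bigr do rewrite mulr_sumr.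
  rewrite [X in _ <= X]exchange_big /=.
  apply: ler_sum => s _.
  have B := bessel u sg (fun e => delta s (yv e) - Defs.total (yv e)) u_ge0 u_orth.
  have E : forall i, \sum_(e : ST) u e * ((delta s (yv e) - Defs.total (yv e)) * sg i e)
                      = c s i - r i.
    move=> i; rewrite -(u_Tsg i) /c -sumrB; apply: eq_bigr => e _; ring.
  under eq_bigr do rewrite -E.
  rewrite -mulr_sumr; apply: (le_trans (ler_wpM2l (p0 s) B)).
  rewrite mulr_sumr le_eqVlt; apply/orP; left; apply/eqP; apply: eq_bigr => e _; ring.
have [e0 _ He] := @arg_maxP _ _ _ (finset.set0 : ST) predT (fun e => risk p delta (yv e)) isT.
exists e0; apply: (le_trans avg).
have -> : risk p delta (yv e0) = \sum_(e : ST) u e * risk p delta (yv e0).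
  by rewrite -mulr_suml /u pw_sum1 mul1r.
apply: ler_sum => e _; apply: ler_wpM2l; first exact: u_ge0.
exact: He.
Qed.

End Lower.

End MP5.
Import MP5.


Lemma incl_le1 (R : realType) (N : nat) (p : {ffun {set 'I_N} -> R}) i :
  is_design p -> incl_prob p i <= 1.
Proof.
move=> [p0 p1]; rewrite (@incl_probE R N p i) -p1; apply: ler_sum => s _.
by rewrite /Ind; case: (i \in s); rewrite ?mulr1 ?mulr0.
Qed.

Lemma exp_size_incl (R : realType) (N : nat) (p : {ffun {set 'I_N} -> R}) :
  exp_size p = \sum_(i < N) incl_prob p i.
Proof.
rewrite /exp_size; under eq_bigr do rewrite card_Ind.
by rewrite sum_exch1; apply: eq_bigr => i _; rewrite (@incl_probE R N p i).
Qed.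

Theorem theorem3 (R : realType) (N : nat) (a b : 'I_N -> R) (n : nat)
  (HN : (1 <= N)%N)
  (Hab : forall i, a i <= b i)
  (Hr : forall i, 0 < half_range a b i)
  (Hn : (0 < n < N)%N) :
  minimax_value a b n%:R = Vn a b n%:R /\
  (exists c : R, 0 < c /\
     \sum_(i < N) Num.min 1 (c * half_range a b i) = n%:R) /\
  (forall c : R, 0 < c ->
     \sum_(i < N) Num.min 1 (c * half_range a b i) = n%:R ->
     let pistar := fun i => Num.min 1 (c * half_range a b i) in
     admissible a b n%:R (poisson_design pistar)
       (diff_estimator (midpoint a b) pistar) /\
     max_risk a b (poisson_design pistar)
       (diff_estimator (midpoint a b) pistar) = Vn a b n%:R).
Proof.
have Hex := @MP3.exists_c R N _ n Hr Hn.
have part3 : forall c : R, 0 < c ->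
     \sum_(i < N) Num.min 1 (c * half_range a b i) = n%:R ->
     let pistar := fun i => Num.min 1 (c * half_range a b i) in
     admissible a b n%:R (poisson_design pistar)
       (diff_estimator (midpoint a b) pistar) /\
     max_risk a b (poisson_design pistar)
       (diff_estimator (midpoint a b) pistar) = Vn a b n%:R.
  move=> c c0 hs pistar.
  have hp : forall i, 0 < pistar i <= 1 by move=> i; apply: (@min_pos R c _ c0 (Hr i)).
  have hp01 : forall i, 0 <= pistar i <= 1.
    by move=> i; have /andP[h1 h2] := hp i; rewrite ltW.
  have hp0 : forall i, pistar i != 0.
    by move=> i; have /andP[h1 _] := hp i; rewrite gt_eqF.
  split.
    split.
    - split; first by move=> s; rewrite poisson_designE pw_ge0.
      by under eq_bigr do rewrite poisson_designE; rewrite pw_sum1.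
    - by move=> i; rewrite incl_prob_pw; have /andP[] := hp i.
    - by rewrite exp_size_pw hs.
    - exact: (@MP4.diff_is_estimator R N a b).
    - by move=> y _; apply: unbiased_pw.
  by rewrite (@max_risk_pw R N a b pistar Hab hp) (@Vn_val R N a b c _ Hr c0 hs).
split; last by split.
have [c [c0 hs]] := Hex.
have [adm eqV] := part3 c c0 hs.
apply/le_anti/andP; split.
  rewrite -eqV; apply: ereal_inf_lbound; by exists (poisson_design (fun i => Num.min 1 (c * half_range a b i)), diff_estimator (midpoint a b) (fun i => Num.min 1 (c * half_range a b i))).
apply: le_ereal_inf_tmp => _ [[p delta] [hd hpos hsize [hloc _] hunb] <-] /=.
have [e He] := @lower_bound R N a b p delta Hab hd hpos hloc hunb.
apply: (@le_trans _ _ (\sum_(i < N) half_range a b i ^+ 2 * (1 - incl_prob p i) / incl_prob p i)%:E).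
  apply: ereal_inf_lbound; exists (incl_prob p) => //; split.
    by move=> i; rewrite hpos incl_le1.
  by rewrite -exp_size_incl.
apply: (@le_trans _ _ (risk p delta (@yv R N a b e))%:E); first by rewrite lee_fin.
apply: ereal_sup_ubound; exists (@yv R N a b e) => //; exact: (@yv_Theta R N a b e Hab).
Qed.
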